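(* For every integer $n\ge3$, \[ \sum_{k=3}^{n}(-1)^{k-1}{n\brace k}(k-1)!\left[(H_{k-1})^2-H^{(2)}_{k-1}\right]H_k=\frac{n^2+2}{3}\,B_{n-3}. \]
   Context: $B_m$ is the $m$th Bernoulli number ($\frac{t}{e^t-1}=\sum_{m\ge0}B_m\frac{t^m}{m!}$). ${n\brace k}$ is the Stirling number of the second kind. $H_k=\sum_{i=1}^k 1/i$ and $H_k^{(2)}=\sum_{i=1}^k 1/i^2$. *)

(* Defs.v *)
From mathcomp Require Import all_boot all_order all_algebra.
Set Implicit Arguments. Unset Strict Implicit. Unset Printing Implicit Defensive.
Import Order.TTheory GRing.Theory Num.Theory.
Local Open Scope ring_scope.

Fixpoint stirling2 (n k : nat) : nat :=
  match n, k with
  | 0, 0 => 1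
  | 0, _.+1 => 0
  | _.+1, 0 => 0
  | n'.+1, k'.+1 => (k'.+1 * stirling2 n' k'.+1 + stirling2 n' k')%N
  end.

(* Bernoulli numbers B_m with t/(e^t-1) = sum B_m t^m/m!  (so B_1 = -1/2).
   Equivalently ((e^t-1)/t) * (sum_m B_m t^m/m!) = 1 as formal power series,
   i.e. sum_{j=0}^m B_j/(j! (m-j+1)!) = [m == 0]; solving for B_m: *)
Fixpoint bern_seq (n : nat) : seq rat :=
  match n with
  | 0 => [:: 1]
  | n'.+1 =>
      let s := bern_seq n' in
      rcons s (- (n'.+1)`!%:R *
               \sum_(j < n'.+1) s`_j / (j`!%:R * (n'.+1 - j).+1`!%:R))
  end.

Definition bernoulli (m : nat) : rat := (bern_seq m)`_m.

Definition bernoulli_gf_spec (B : nat -> rat) : Prop :=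
  forall m : nat,
    \sum_(j < m.+1) B j / (j`!%:R * (m - j).+1`!%:R) = (m == 0%N)%:R.

Definition harm (k : nat) : rat := \sum_(1 <= i < k.+1) (i%:R)^-1.
Definition harm2 (k : nat) : rat := \sum_(1 <= i < k.+1) (i%:R ^+ 2)^-1.

(* Main.v *)
Require Import Defs.
From mathcomp Require Import all_boot all_order all_algebra.
From mathcomp Require Import ring zify.
Import Order.TTheory GRing.Theory Num.Theory.
Local Open Scope ring_scope.

Lemma stirling2_gt (n k : nat) : (n < k)%N -> stirling2 n k = 0%N.
Proof.
elim: n k => [|n IH] [|k] //= hk.
by rewrite !IH // ?muln0 // ltnW.
Qed.

Lemma stir_rec (V : zmodType) (f : nat -> V) (n : nat) :
  \sum_(k < n.+2) f k *+ stirling2 n.+1 k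
  = \sum_(k < n.+1) (f k *+ k + f k.+1) *+ stirling2 n k.
Proof.
rewrite big_ord_recl /= mulr0n add0r.
under eq_bigr do rewrite /= mulrnDr.
rewrite big_split /=.
under [X in _ = X]eq_bigr do rewrite mulrnDl.
rewrite big_split /=; congr (_ + _).
rewrite big_ord_recr /= stirling2_gt // muln0 mulr0n addr0.
rewrite [RHS]big_ord_recl /=.
rewrite mulr0n mul0rn add0r.
by apply: eq_bigr => i _; rewrite /bump /= add1n mulrnA.
Qed.

Definition qf (k : nat) : {poly rat} := \prod_(i < k) ('X - (i%:R)%:P).

Lemma qfS k : qf k.+1 = qf k * ('X - (k%:R)%:P).
Proof. by rewrite /qf big_ord_recr. Qed.

Lemma Xn_qf n : 'X^n = \sum_(k < n.+1) qf k *+ stirling2 n k.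
Proof.
elim: n => [|n IH].
  by rewrite big_ord_recl big_ord0 /= addr0 expr0 /qf big_ord0.
rewrite exprS IH mulr_sumr stir_rec; apply: eq_bigr => k _.
rewrite mulrnAr; congr (_ *+ _).
rewrite qfS polyC_natr -mulr_natr; ring.
Qed.


Lemma harm0 : harm 0 = 0.
Proof. by rewrite /harm big_geq. Qed.
Lemma harmS k : harm k.+1 = harm k + (k.+1%:R)^-1.
Proof. by rewrite /harm big_nat_recr. Qed.
Lemma harm20 : harm2 0 = 0.
Proof. by rewrite /harm2 big_geq. Qed.
Lemma harm2S k : harm2 k.+1 = harm2 k + (k.+1%:R ^+ 2)^-1.
Proof. by rewrite /harm2 big_nat_recr. Qed.

Lemma coef_qfS k j :
  (qf k.+1)`_j.+1 = (qf k)`_j - (qf k)`_j.+1 * k%:R.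
Proof. by rewrite qfS mulrBr coefB coefMX coefMC. Qed.

Lemma coef_qfS0 k : (qf k.+1)`_0 = - ((qf k)`_0 * k%:R).
Proof. by rewrite qfS mulrBr coefB coefMX coefMC sub0r. Qed.

Lemma qf0coef k : (qf k.+1)`_0 = 0.
Proof.
elim: k => [|k IH]; first by rewrite coef_qfS0 mulr0 oppr0.
by rewrite coef_qfS0 IH mul0r oppr0.
Qed.

Lemma qf_size k : (size (qf k) <= k.+1)%N.
Proof.
elim: k => [|k IH]; first by rewrite /qf big_ord0 size_poly1.
rewrite qfS; apply: leq_trans (size_polyMleq _ _) _.
by rewrite size_XsubC addn2 /=.
Qed.

Lemma qf1 k : (qf k.+1)`_1 = (-1) ^+ k * k`!%:R.
Proof.
elim: k => [|k IH].
  by rewrite coef_qfS /qf big_ord0 coefC coefC /= mulr0 subr0 expr0 mulr1.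
rewrite coef_qfS qf0coef IH factS natrM exprS; ring.
Qed.

Lemma qf2 k : (qf k.+1)`_2 = (-1) ^+ k.+1 * k`!%:R * harm k.
Proof.
elim: k => [|k IH].
  by rewrite harm0 mulr0 coef_qfS /qf big_ord0 !coefC /= mulr0 subr0.
rewrite coef_qfS qf1 IH harmS factS natrM !exprS.
have h : (k.+1%:R : rat) != 0 by rewrite pnatr_eq0.
field; by rewrite ?nat1r ?pnatr_eq0.

Qed.

Lemma qf3 k : 2 * (qf k.+1)`_3 = (-1) ^+ k * k`!%:R * (harm k ^+ 2 - harm2 k).
Proof.
elim: k => [|k IH].
  by rewrite harm0 harm20 coef_qfS /qf big_ord0 !coefC /= mulr0 subr0 mulr0.
have IH' : (qf k.+1)`_3 = ((-1) ^+ k * k`!%:R * (harm k ^+ 2 - harm2 k)) / 2.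
  by rewrite -IH; field.
rewrite coef_qfS IH' qf2 harmS harm2S factS natrM !exprS.
have h : (k.+1%:R : rat) != 0 by rewrite pnatr_eq0.
field; by rewrite ?nat1r ?pnatr_eq0.
Qed.


Definition U n : {poly rat} :=
  \sum_(k < n.+1) ((k.+1%:R)^-1 *: (('X + 1) * qf k)) *+ stirling2 n k.
Definition Fm n m : rat := \sum_(k < n.+1) (harm k * (qf k)`_m) *+ stirling2 n k.

Lemma coefU n j : (U n)`_j.+1 =
  \sum_(k < n.+1) ((k.+1%:R)^-1 * ((qf k)`_j + (qf k)`_j.+1)) *+ stirling2 n k.
Proof.
rewrite /U coef_sum; apply: eq_bigr => k _.
by rewrite coefMn coefZ mulrDl mul1r coefD coefXM.
Qed.

Lemma coefXn_sum n j :
  \sum_(k < n.+1) (qf k)`_j *+ stirling2 n k = (j == n)%:R.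
Proof.
rewrite -coefXn Xn_qf coef_sum; apply: eq_bigr => k _.
by rewrite coefMn.
Qed.

Lemma Frec n m : Fm n.+1 m.+1 = Fm n m - (m.+1 == n)%:R + (U n)`_m.+1.
Proof.
rewrite /Fm (@stir_rec _ (fun k : nat => harm k * (qf k)`_m.+1)) coefU -coefXn_sum -sumrN -!big_split /=.
apply: eq_bigr => k _.
rewrite -mulNrn -!mulrnDl; congr (_ *+ _).
rewrite coef_qfS harmS -mulr_natr.
have h : (k.+1%:R : rat) != 0 by rewrite pnatr_eq0.
field; by rewrite ?nat1r ?pnatr_eq0.
Qed.

Lemma F0 n : Fm n 0 = 0.
Proof.
rewrite /Fm big1 // => -[[|k] hk] _ /=; first by rewrite harm0 mul0r mul0rn.
by rewrite qf0coef mulr0 mul0rn.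
Qed.


Lemma hornerqfS k x : (qf k.+1).[x] = (qf k).[x] * (x - k%:R).
Proof. by rewrite qfS hornerM hornerXsubC. Qed.

Lemma qf_shift k x : (qf k.+1).[x] = x * (qf k).[x - 1].
Proof.
elim: k => [|k IH].
  by rewrite hornerqfS /qf big_ord0 !hornerC subr0 mul1r mulr1.
rewrite hornerqfS IH hornerqfS -natr1; ring.
Qed.

Lemma Uhorner n x : (U n).[x] =
  \sum_(k < n.+1) ((k.+1%:R)^-1 * ((x + 1) * (qf k).[x])) *+ stirling2 n k.
Proof.
rewrite /U horner_sum; apply: eq_bigr => k _.
by rewrite hornerMn hornerZ hornerM hornerD hornerX hornerC.
Qed.

Lemma Uev n x : (U n).[x] - (U n).[x - 1] = x ^+ n.
Proof.
have -> : x ^+ n = ('X^n).[x] by rewrite hornerXn.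
rewrite !Uhorner Xn_qf horner_sum -sumrB; apply: eq_bigr => k _.
rewrite hornerMn -mulrnBl; congr (_ *+ _).
have e := qf_shift k x; rewrite hornerqfS in e.
have h : (k.+1%:R : rat) != 0 by rewrite pnatr_eq0.
rewrite subrK.
have -> : x * (qf k).[x - 1] = (qf k).[x] * (x - k%:R) by rewrite e.
rewrite -natr1; field; by rewrite natr1 pnatr_eq0.
Qed.

Lemma Um1 n : (U n).[-1] = 0.
Proof.
rewrite Uhorner big1 // => k _.
by rewrite addNr mul0r mulr0 mul0rn.
Qed.

Lemma poly_nat_roots (p : {poly rat}) : (forall i : nat, p.[i%:R] = 0) -> p = 0.
Proof.
move=> hp; apply/eqP; apply: contraT => hp0.
have := max_poly_roots hp0 (rs := [seq i%:R | i <- iota 0 (size p)]).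
rewrite size_map size_iota ltnn; apply.
  by apply/allP => y /mapP [i _ ->]; rewrite /root hp.
rewrite map_inj_uniq ?iota_uniq // => i j /eqP.
by rewrite eqr_nat => /eqP.
Qed.

Lemma poly_ext (p q : {poly rat}) : (forall x, p.[x] = q.[x]) -> p = q.
Proof.
move=> h; apply/eqP; rewrite -subr_eq0; apply/eqP.
by apply: poly_nat_roots => i; rewrite hornerD hornerN h subrr.
Qed.

Lemma poly_periodic (r : {poly rat}) :
  (forall x, r.[x] = r.[x - 1]) -> r = (r.[0])%:P.
Proof.
move=> h; apply/eqP; rewrite -subr_eq0; apply/eqP.
apply: poly_nat_roots => i; rewrite hornerD hornerN hornerC.
elim: i => [|i IH]; first by rewrite subrr.
by rewrite h -natr1 addrK.
Qed.


Lemma Uderiv n j : (0 < j)%N -> (U n.+1)`_j.+1 * j.+1%:R = n.+1%:R * (U n)`_j.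
Proof.
move=> hj.
set D := (U n.+1)^`() - n.+1%:R *: U n.
have hq : U n.+1 - (U n.+1 \Po ('X - 1%:P)) = 'X^(n.+1).
  apply: poly_ext => x.
  by rewrite hornerD hornerN horner_comp hornerXsubC hornerXn Uev.
have hd := congr1 deriv hq.
rewrite derivB deriv_comp derivXsubC mulr1 derivXn /= in hd.
have per : forall x, D.[x] = D.[x - 1].
  move=> x; apply/eqP; rewrite -subr_eq0; apply/eqP.
  have := congr1 (horner^~ x) hd.
  rewrite hornerD hornerN horner_comp hornerXsubC hornerMn hornerXn => e.
  rewrite /D !hornerD !hornerN !hornerZ.
  have := Uev n x => e2.
  rewrite -mulr_natl in e.
  transitivity ((U n.+1)^`().[x] - (U n.+1)^`().[x - 1]
     - n.+1%:R * ((U n).[x] - (U n).[x - 1])); first ring.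
  by rewrite e e2 subrr.
have := congr1 (fun p : {poly rat} => p`_j) (@poly_periodic D per).
rewrite coefC /= -[j]prednK // /D coefB coefZ coef_deriv prednK //.
rewrite (negbTE (lt0n_neq0 hj)) => /eqP.
by rewrite subr_eq0 mulr_natr => /eqP.
Qed.

Definition beta n := (U n)`_1.

Lemma cU n j : (U (n + j))`_j.+1 =
  (n + j)`!%:R / (n`!%:R * j.+1`!%:R) * beta n.
Proof.
elim: j => [|j IH].
  rewrite addn0 /beta (_ : 1`! = 1%N) // mulr1 divff ?mul1r //.
  by rewrite pnatr_eq0 -lt0n fact_gt0.
have h := @Uderiv (n + j) j.+1 (ltn0Sn j).
rewrite IH in h.
rewrite addnS.
have hj : (j.+2%:R : rat) != 0 by rewrite pnatr_eq0.
have hf : (n`!%:R : rat) != 0 by rewrite pnatr_eq0 -lt0n fact_gt0.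
have hf2 : (j.+1`!%:R : rat) != 0 by rewrite pnatr_eq0 -lt0n fact_gt0.
have -> : (U (n + j).+1)`_j.+2 =
   (n + j).+1%:R * ((n + j)`!%:R / (n`!%:R * j.+1`!%:R) * beta n) / j.+2%:R.
  rewrite -h; field; by rewrite -[2]/(2%:R) -natrD pnatr_eq0.
rewrite (factS (n + j)) !factS !natrM.
have hf3 : (j`!%:R : rat) != 0 by rewrite pnatr_eq0 -lt0n fact_gt0.
field.
by rewrite nat1r -[2]/(2%:R) -natrD !pnatr_eq0 -!lt0n !fact_gt0.
Qed.


Lemma U0coef n : (U n)`_0 = (n == 0%N)%:R.
Proof.
have := Uev n 0; rewrite sub0r Um1 subr0 horner_coef0 => ->.
by rewrite expr0n.
Qed.

Lemma Usize n : (size (U n) <= n.+2)%N.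
Proof.
apply/leq_sizeP => -[|j] // hj; rewrite coefU big1 // => k _.
have hk : (k <= n)%N by rewrite -ltnS.
rewrite !nth_default ?addr0 ?mulr0 ?mul0rn //.
  by apply: leq_trans (qf_size k) _; rewrite ltnS; apply: leq_trans hk _; lia.
by apply: leq_trans (qf_size k) _; lia.
Qed.

Lemma Usum_rev n (G : nat -> rat) :
  \sum_(i < n.+1) G i = \sum_(j < n.+1) G (n - j)%N.
Proof.
rewrite (reindex_inj rev_ord_inj) /=; apply: eq_bigr => j _.
by rewrite subSS.
Qed.

Lemma cU' n j : (j <= n)%N ->
  (U n)`_(n - j).+1 = n`!%:R / (j`!%:R * (n - j).+1`!%:R) * beta j.
Proof. by move=> h; have := cU j (n - j); rewrite subnKC. Qed.

Definition bsum (g : nat -> rat) m :=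
  \sum_(j < m.+1) g j / (j`!%:R * (m - j).+1`!%:R).

Lemma fact_nz m : (m`!%:R : rat) != 0.
Proof. by rewrite pnatr_eq0 -lt0n fact_gt0. Qed.

Lemma bsum_beta n : bsum beta n = (n`!%:R)^-1.
Proof.
have e := Uev n 1; rewrite subrr horner_coef0 expr1n in e.
rewrite (horner_coef_wide _ (Usize n)) big_ord_recl /= expr0 mulr1 in e.
have e2 : \sum_(i < n.+1) (U n)`_i.+1 = 1.
  rewrite -[RHS]e.
  rewrite addrC addKr; apply: eq_bigr => i _.
  by rewrite expr1n mulr1.
rewrite (Usum_rev n (fun i => (U n)`_i.+1)) in e2.
have e3 : n`!%:R * bsum beta n = 1.
  rewrite -[RHS]e2 /bsum mulr_sumr; apply: eq_bigr => j _.
  have hj : (j <= n)%N by rewrite -ltnS.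
  by rewrite cU' // mulrA mulrAC.
by apply: (mulfI (fact_nz n)); rewrite e3 mulfV ?fact_nz.
Qed.


Lemma sgn2 j : (-1) ^+ j * (-1) ^+ j = 1 :> rat.
Proof. by rewrite -exprD addnn -mul2n exprM sqrrN !expr1n. Qed.

Lemma sgn_sub n j : (j <= n)%N -> (-1) ^+ (n - j).+1 = (-1) ^+ n.+1 * (-1) ^+ j :> rat.
Proof. by move=> hj; rewrite -[in RHS](subnK hj) -addSn exprD -mulrA sgn2 mulr1. Qed.

Definition gam j := (-1) ^+ j * beta j.

Lemma bsum_gam n : bsum gam n = (n == 0%N)%:R.
Proof.
have e := Um1 n.
rewrite (horner_coef_wide _ (Usize n)) big_ord_recl /= expr0 mulr1 U0coef in e.
rewrite (Usum_rev n (fun i => (U n)`_(bump 0 i) * (-1) ^+ bump 0 i)) in e.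
have e3 : n`!%:R * (-1) ^+ n.+1 * bsum gam n = - (n == 0%N)%:R.
  apply/eqP; rewrite -addr_eq0; apply/eqP; rewrite addrC -[RHS]e; congr (_ + _).
  rewrite /bsum mulr_sumr; apply: eq_bigr => j _.
  have hj : (j <= n)%N by rewrite -ltnS.
  rewrite /bump /= add1n cU' //.
  rewrite (@sgn_sub n j hj).
  rewrite /gam; move: (j`!%:R : rat) ((n - j).+1`!%:R : rat) => a b.
  rewrite !mulrA; ring.
case: n e e3 => [|m] e e3.
  move: e3; rewrite fact0 expr1 mul1r mulN1r => /oppr_inj ->; done.
move/eqP: e3; rewrite /= mulr0n oppr0 mulf_eq0 mulf_eq0.
rewrite (negbTE (fact_nz m.+1)) signr_eq0 /=.
by move/eqP.
Qed.

Lemma bsum_uniq f g : (forall m, bsum f m = bsum g m) -> forall m, f m = g m.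
Proof.
move=> h m; elim/ltn_ind: m => m IH.
have := h m; rewrite /bsum !big_ord_recr /=.
rewrite (eq_bigr (fun j : 'I_m => g j / (j`!%:R * (m - j).+1`!%:R))).
  move/addrI; rewrite subnn => /(congr1 (fun x => x * (m`!%:R * 1`!%:R))).
  by rewrite !divfK // mulf_neq0 ?fact_nz.
by move=> j _; rewrite IH.
Qed.


Lemma size_bern n : size (bern_seq n) = n.+1.
Proof. by elim: n => [|n IH] //=; rewrite size_rcons IH. Qed.

Lemma bern_nth n j : (j <= n)%N -> (bern_seq n)`_j = bernoulli j.
Proof.
elim: n j => [|n IH] j hj.
  by move: hj; rewrite leqn0 => /eqP ->.
case: (ltngtP j n.+1) hj => // [hj _|-> _]; last by [].
by rewrite /= nth_rcons size_bern hj IH.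
Qed.

Lemma bsum_bern m : bsum bernoulli m = (m == 0%N)%:R.
Proof.
case: m => [|k].
  rewrite /bsum big_ord_recl big_ord0 /bernoulli /= addr0.
  by rewrite subnn (_ : 1`! = 1%N) // fact0 mulr1 div1r invr1.
rewrite /bsum big_ord_recr /= subnn.
have -> : bernoulli k.+1 = - (k.+1)`!%:R *
   \sum_(j < k.+1) bernoulli j / (j`!%:R * (k.+1 - j).+1`!%:R).
  rewrite {1}/bernoulli /= nth_rcons size_bern ltnn eqxx; congr (_ * _).
  by apply: eq_bigr => j _; rewrite bern_nth // -ltnS.
rewrite (_ : 1`! = 1%N) // mulr1.
have hf := fact_nz k.+1.
move: hf; set S := \sum_(i < k.+1) _; move: S => S hf.
rewrite -mulNrn -mulr_natr; field; exact: fact_nz.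
Qed.

Lemma gam_bern j : gam j = bernoulli j.
Proof. by apply: bsum_uniq => m; rewrite bsum_gam bsum_bern. Qed.

Lemma beta_gam j : beta j - gam j = (j == 1%N)%:R.
Proof.
move: j; apply: (@bsum_uniq (fun j => beta j - gam j) (fun j => (j == 1%N)%:R)).
move=> m.
have -> : bsum (fun j => beta j - gam j) m = bsum beta m - bsum gam m.
  by rewrite /bsum -sumrB; apply: eq_bigr => j _; rewrite mulrBl.
rewrite bsum_beta bsum_gam /bsum.
case: m => [|k].
  by rewrite big_ord_recl big_ord0 /= fact0 invr1 subrr mul0r addr0.
rewrite big_ord_recl big_ord_recl /= big1; last first.
  by move=> i _; rewrite mul0r.
rewrite mul0r add0r addr0 subr0 mul1r (_ : 1`! = 1%N) // mul1r subn1 /=.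
by [].
Qed.

Theorem mainTheorem3 (n : nat) (hn : (3 <= n)%N) :
  \sum_(3 <= k < n.+1)
     (-1) ^+ k.-1 * (stirling2 n k)%:R * (k.-1)`!%:R
       * ((harm k.-1) ^+ 2 - harm2 k.-1) * harm k
  = ((n ^ 2 + 2)%:R / 3%:R) * bernoulli (n - 3) :> rat.
Proof.
case: n hn => [|[|[|p]]] // _.
transitivity (\sum_(3 <= k < p.+4) 2 * ((harm k * (qf k)`_3) *+ stirling2 p.+3 k)).
  apply: eq_big_nat => -[|k] // _.
  rewrite (_ : k.+1.-1 = k) //; move: (stirling2 p.+3 k.+1) => s.
  have h3 := qf3 k.
  have -> : (qf k.+1)`_3 = ((-1) ^+ k * k`!%:R * (harm k ^+ 2 - harm2 k)) / 2.
    by rewrite -h3; field.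
  by rewrite -mulr_natr; field.
transitivity (2 * Fm p.+3 3).
  rewrite /Fm mulr_sumr.
  rewrite -(big_mkord xpredT (fun i => 2 * (harm i * (qf i)`_3 *+ stirling2 p.+3 i))).
  rewrite [RHS](big_cat_nat _ (n := 3)) // [X in _ = X + _]big_nat_cond big1 ?add0r //.
  move=> k /andP [/andP [_ hk] _].
  rewrite nth_default ?mulr0 ?mul0rn ?mulr0 //.
  by apply: leq_trans (qf_size k) _.
rewrite Frec Frec Frec F0 /=.
have c2 := cU p 1; rewrite addn1 in c2.
have c3 := cU p 2; rewrite addn2 in c3.
rewrite c2 c3 -/(beta p).
have -> : (p.+3 - 3 = p)%N by lia.
rewrite -gam_bern.
have hb := beta_gam p.
have -> : gam p = beta p - (p == 1%N)%:R by rewrite -hb; ring.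
rewrite (_ : (2 == p.+1) = (1 == p)) // (_ : (3 == p.+2) = (1 == p)) // (eq_sym p 1).
rewrite (factS p.+1) (factS p) !natrM.
have -> : ((p.+3 ^ 2 + 2)%:R : rat) = p%:R ^+ 2 + 6 * p%:R + 11.
  rewrite natrD natrX -addn3 natrD; ring.
have hf := fact_nz p.
move: hf; move: (p`!%:R : rat) => f hf.
case: eqP => [<-|_].
  by rewrite /=; field.
rewrite /= -[p.+2%:R]natr1 -[p.+1%:R]natr1; field; exact: hf.
Qed.
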